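(* Let $n$ and $t$ be positive integers with $t\le n$, and let $G_{n,t}$ be the subgroup of the group $(\mathcal{P}[n],\triangle)$ generated by the sets $g_1,g_2,\ldots,g_t\subseteq[n]$ constructed below. Then (i) $|G_{n,t}|=2^t$; and (ii) every non-zero (i.e. non-empty) element of $G_{n,t}$ intersects every cyclic translate modulo $n$ of $[t]$, that is, every set of the form $\{s+1,s+2,\ldots,s+t\}$ with $s\in\mathbb{Z}$, where each element is replaced by its representative in $[n]=\{1,\ldots,n\}$ modulo $n$.
   Context: $\mathcal{P}[n]$ denotes the power set of $[n]=\{1,2,\ldots,n\}$, which is an abelian group under symmetric difference $A\triangle B=(A\setminus B)\cup(B\setminus A)$, with identity (zero) the empty set. For integers $y$ and $z>0$, $[y]_z$ denotes the least strictly positive residue of $y$ modulo $z$ (so $[y]_z\in\{1,\ldots,z\}$). Construction. Apply Euclid's algorithm to $n$ and $t$: set $r_{-1}=n$, $r_0=t$, and for $i\ge1$ write $r_{i-2}=q_ir_{i-1}+r_i$ with $0\le r_i<r_{i-1}$, stopping at the first index $k\ge1$ with $r_k=0$. Thus $n=q_1t+r_1$, $t=q_2r_1+r_2$, $r_1=q_3r_2+r_3$, $\ldots$, $r_{k-2}=q_kr_{k-1}$, with $t>r_1>\cdots>r_{k-1}>0$. Define partial sums $n_m=q_1t+q_3r_2+\cdots+q_{2m-1}r_{2m-2}$ (for $m\ge0$ with $2m-1\le k$) and $t_m=q_2r_1+q_4r_3+\cdots+q_{2m}r_{2m-1}$ (for $m\ge0$ with $2m\le k$), with $n_0=t_0=0$.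 (Then $n=n_m+r_{2m-1}$ and $t=t_m+r_{2m}$.) Fix $i$ with $1\le i\le t$, and let $a$ be maximal (among indices for which $t_a$ is defined) with $t_a<i$. For $0\le j\le a$ set $g_i^{(j)}=\{x\in(n_j,n_{j+1}]\cap\mathbb{Z}: x-n_j\equiv i-t_j \pmod{r_{2j}}\}$, and set $g_i^{(a+1)}=\{n_{a+1}+[i-t_a]_{r_{2a+1}}\}$ if $k\ne 2a+1$, and $g_i^{(a+1)}=\emptyset$ if $k=2a+1$. Finally let $g_i=\bigcup_{j=0}^{a+1}g_i^{(j)}\subseteq[n]$. *)

(* Defs.v *)
From mathcomp Require Import all_boot all_order all_algebra.
Set Implicit Arguments. Unset Strict Implicit. Unset Printing Implicit Defensive.
Import Order.TTheory GRing.Theory Num.Theory.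

(* P[n] is represented by {set 'I_n}: the ordinal x : 'I_n stands for the
   integer x+1 of [n] = {1,...,n}. *)

Definition symdiff (T : finType) (A B : {set T}) : {set T} :=
  (A :\: B) :|: (B :\: A).

(* H is a subgroup of ({set T}, symdiff): contains the zero (empty set) and
   is closed under the group law (every element is its own inverse). *)
Definition is_subgroup (T : finType) (H : {set {set T}}) : bool :=
  (set0 \in H) && [forall A in H, forall B in H, symdiff A B \in H].

Definition generated (T : finType) (S : {set {set T}}) : {set {set T}} :=
  \bigcap_(H | is_subgroup H && (S \subset H)) H.

Definition lpr (y z : int) : int := (((y - 1) %% z)%Z + 1)%R.

(* rp n t i = (r_{i-1}, r_i), with r_{-1} = n, r_0 = t, r_i = r_{i-2} mod r_{i-1}. *)
Fixpoint rp (n t : nat) (i : nat) : nat * nat :=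
  match i with
  | 0 => (n, t)
  | i'.+1 => let: (x, y) := rp n t i' in (y, x %% y)
  end.

Definition r (n t i : nat) : nat := (rp n t i).2.

(* q n t i = q_i = r_{i-2} div r_{i-1}  (i >= 1) *)
Definition q (n t i : nat) : nat := (rp n t i.-1).1 %/ (rp n t i.-1).2.

(* k = the first index >= 1 with r_k = 0 (for t >= 1; r_0 = t > 0 and the
   remainders strictly decrease, so such k exists and k <= t < (n+t).+1). *)
Definition kE (n t : nat) : nat := find (fun i => r n t i == 0) (iota 0 (n + t).+1).

Definition nm (n t m : nat) : nat := \sum_(j < m) q n t (2 * j).+1 * r n t (2 * j).
Definition tm (n t m : nat) : nat := \sum_(j < m) q n t (2 * j).+2 * r n t (2 * j).+1.

(* a = maximal index (with t_a defined, i.e. 2a <= k) such that t_a < i *)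
Definition aE (n t i : nat) : nat :=
  \max_(a < (kE n t)./2.+1 | tm n t a < i) (a : nat).

Definition g_mem (n t i x : nat) : bool :=
  let a := aE n t i in
  [exists j : 'I_a.+1,
     (nm n t j < x <= nm n t j.+1) &&
     ((Posz x - Posz (nm n t j))%R == (Posz i - Posz (tm n t j))%R %[mod Posz (r n t (2 * j))])%Z]
  || ((kE n t != (2 * a).+1) &&
      (Posz x == (Posz (nm n t a.+1) + lpr (Posz i - Posz (tm n t a)) (Posz (r n t (2 * a).+1)))%R)).

Definition g (n t i : nat) : {set 'I_n} := [set x : 'I_n | g_mem n t i x.+1].

Definition G (n t : nat) : {set {set 'I_n}} :=
  generated [set g n t (val i).+1 | i : 'I_t].

Definition window (n t : nat) (s : int) : {set 'I_n} :=
  [set x : 'I_n | [exists j : 'I_t, Posz (x.+1) == lpr (s + Posz (val j).+1)%R (Posz n)]].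

(* Main.v *)
Require Import Defs.
From mathcomp Require Import all_boot all_order all_algebra.
From mathcomp Require Import zify.
Set Implicit Arguments. Unset Strict Implicit. Unset Printing Implicit Defensive.
Import Order.TTheory GRing.Theory Num.Theory.

Lemma rpS n t j : rp n t j.+1 = ((rp n t j).2, (rp n t j).1 %% (rp n t j).2).
Proof. by rewrite /=; case: (rp n t j). Qed.

Lemma rp_shift n t j : rp n t j.+1 = rp t (n %% t) j.
Proof. elim: j => [|j IH] //. by rewrite rpS IH -rpS. Qed.

Lemma r_shift n t j : r n t j.+1 = r t (n %% t) j.
Proof. by rewrite /r rp_shift. Qed.

Lemma q_shift n t j : q n t j.+2 = q t (n %% t) j.+1.
Proof. by rewrite /q (_ : j.+2.-1 = j.+1) // rp_shift. Qed.

Lemma r0 n t : r n t 0 = t. Proof. by []. Qed.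
Lemma q1 n t : q n t 1 = n %/ t. Proof. by []. Qed.

Lemma tm_shift n t m : tm n t m = nm t (n %% t) m.
Proof.
rewrite /tm /nm; apply: eq_bigr => j _.
by rewrite -q_shift -r_shift.
Qed.

Lemma nm_shift n t m : nm n t m.+1 = n %/ t * t + tm t (n %% t) m.
Proof.
rewrite /nm /tm big_ord_recl /= muln0 q1 r0; congr (_ + _).
apply: eq_bigr => j _ /=.
have -> : (2 * bump 0 j).+1 = (2 * j).+3 by rewrite /bump /=; lia.
have -> : (2 * bump 0 j) = (2 * j).+2 by rewrite /bump /=; lia.
by rewrite q_shift r_shift.
Qed.

Lemma nm0 n t : nm n t 0 = 0. Proof. by rewrite /nm big_ord0. Qed.
Lemma tm0 n t : tm n t 0 = 0. Proof. by rewrite /tm big_ord0. Qed.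

Lemma nmS n t m : nm n t m.+1 = nm n t m + q n t (2 * m).+1 * r n t (2 * m).
Proof. by rewrite /nm big_ord_recr. Qed.
Lemma tmS n t m : tm n t m.+1 = tm n t m + q n t (2 * m).+2 * r n t (2 * m).+1.
Proof. by rewrite /tm big_ord_recr. Qed.

Lemma nm_mono n t m m' : m <= m' -> nm n t m <= nm n t m'.
Proof.
move=> /subnK <-; elim: (m' - m) => [|d IH] //=.
by rewrite addSn nmS (leq_trans IH) // leq_addr.
Qed.
Lemma tm_mono n t m m' : m <= m' -> tm n t m <= tm n t m'.
Proof.
move=> /subnK <-; elim: (m' - m) => [|d IH] //=.
by rewrite addSn tmS (leq_trans IH) // leq_addr.
Qed.

Definition Char n t i x : Prop :=
 (exists j, [/\ nm n t j < x <= nm n t j.+1, tm n t j < i &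
    ((Posz x - Posz (nm n t j))%R == (Posz i - Posz (tm n t j))%R %[mod Posz (r n t (2*j))])%Z])
 \/ (exists b, [/\ tm n t b < i <= tm n t b.+1, nm n t b.+1 < x &
    ((Posz i - Posz (tm n t b))%R == (Posz x - Posz (nm n t b.+1))%R %[mod Posz (r n t (2*b).+1)])%Z]).

Lemma nm1 n t : nm n t 1 = n %/ t * t.
Proof. by rewrite nm_shift tm0 addn0. Qed.

Lemma Char_shift n t i x : nm n t 1 < x ->
  Char n t i x <-> Char t (n %% t) (x - nm n t 1) i.
Proof.
move: (nm_shift n t); rewrite nm1; move: (n %/ t * t) => N hs hx.
have hN : nm n t 1 = N by rewrite hs tm0 addn0.
split.
- case=> [[[|b] [/andP [h1 h2] h3 h4]] | [b [/andP [h1 h2] h3 h4]]].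
  + by move: h2; rewrite hN leqNgt hx.
  + right; exists b; move: h1 h2 h3 h4; rewrite !hs !(tm_shift n t).
    rewrite (_ : 2 * b.+1 = (2 * b).+1.+1); last by lia.
    rewrite (r_shift n t) => h1 h2 h3 h4; split; [lia | lia |].
    move: h4; congr (_ == _ %[mod _])%Z; lia.
  + left; exists b; move: h1 h2 h3 h4; rewrite !hs !(tm_shift n t).
    rewrite (r_shift n t) => h1 h2 h3 h4; split; [lia | lia |].
    move: h4; congr (_ == _ %[mod _])%Z; lia.
- case=> [[b [/andP [h1 h2] h3 h4]] | [b [/andP [h1 h2] h3 h4]]].
  + right; exists b; move: h1 h2 h3 h4; rewrite !hs !(tm_shift n t).
    rewrite (r_shift n t) => h1 h2 h3 h4; split; [lia | lia |].
    move: h4; congr (_ == _ %[mod _])%Z; lia.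
  + left; exists b.+1; move: h1 h2 h3 h4; rewrite !hs !(tm_shift n t).
    rewrite (_ : 2 * b.+1 = (2 * b).+1.+1); last by lia.
    rewrite (r_shift n t) => h1 h2 h3 h4; split; [lia | lia |].
    move: h4; congr (_ == _ %[mod _])%Z; lia.
Qed.

Lemma Char_low n t i x : 0 < x -> x <= nm n t 1 -> 0 < i ->
  Char n t i x <-> (x == i %[mod t]).
Proof.
move=> x0 hx i0; split.
- case=> [[j [/andP [h1 h2] h3 h4]] | [b [/andP [h1 h2] h3 h4]]].
  + case: j h1 h2 h3 h4 => [|j] h1 h2 h3 h4.
    * by move: h4; rewrite nm0 tm0 !subr0 r0 !modz_nat eqz_nat.
    * have := nm_mono n t (isT : 1 <= j.+1); lia.
  + have := nm_mono n t (isT : 1 <= b.+1); lia.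
- move=> h; left; exists 0; rewrite nm0 tm0 !subr0 r0 !modz_nat eqz_nat; split => //.
  by rewrite x0 hx.
Qed.

Definition R n t j := (rp n t j).1.

Lemma R_S n t j : R n t j.+1 = r n t j.
Proof. by rewrite /R rpS. Qed.
Lemma r_S n t j : r n t j.+1 = R n t j %% r n t j.
Proof. by rewrite /r /R rpS. Qed.
Lemma q_S n t j : q n t j.+1 = R n t j %/ r n t j.
Proof. by []. Qed.
Lemma R_eq n t j : R n t j = q n t j.+1 * r n t j + r n t j.+1.
Proof. by rewrite q_S r_S -divn_eq. Qed.

Lemma n_eq n t m : n = nm n t m + R n t (2 * m).
Proof.
elim: m => [|m IH]; first by rewrite nm0.
rewrite nmS (_ : 2 * m.+1 = (2 * m).+2); last by lia.
rewrite R_S {1}IH R_eq; lia.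
Qed.

Lemma t_eq n t m : t = tm n t m + r n t (2 * m).
Proof.
elim: m => [|m IH]; first by rewrite tm0.
rewrite tmS (_ : 2 * m.+1 = (2 * m).+2); last by lia.
rewrite {1}IH -R_S R_eq; lia.
Qed.

Lemma r_zero_exists n t : exists2 j, j <= t & r n t j = 0.
Proof.
suff H : forall j, (exists2 j', j' <= j & r n t j' = 0) \/ r n t j + j <= t.
  case: (H t) => [[j' h1 h2]|h]; first by exists j'; lia.
  by exists t => //; lia.
elim=> [|j [[j' h1 h2]|h]]; first by right; rewrite r0 addn0.
- by left; exists j' => //; lia.
- case: (posnP (r n t j)) => hj; first by left; exists j.
  right; rewrite r_S; have := ltn_pmod (R n t j) hj; lia.
Qed.

Section K.
Variables n t : nat.
Hypothesis t0 : 0 < t.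

Lemma kE_spec : [/\ 0 < kE n t, r n t (kE n t) = 0 &
   forall j, j < kE n t -> 0 < r n t j].
Proof.
have [j hj hr] := r_zero_exists n t.
have hhas : has (fun i => r n t i == 0) (iota 0 (n + t).+1).
  by apply/hasP; exists j; [rewrite mem_iota; lia | apply/eqP].
have hk : kE n t < (n + t).+1 by move: hhas; rewrite has_find size_iota.
split.
- rewrite lt0n; apply/negP => /eqP h.
  have := nth_find 0 hhas; rewrite -/(kE n t) h nth_iota // r0 => /eqP; lia.
- by have := nth_find 0 hhas; rewrite -/(kE n t) nth_iota // => /eqP.
- move=> j' hj'; have := before_find 0 hj'; rewrite nth_iota; last by lia.
  by rewrite add0n lt0n => /negbT.
Qed.

Lemma prod_after j : kE n t <= j -> (rp n t j).1 * (rp n t j).2 = 0.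
Proof.
move=> /subnK <-; elim: (j - kE n t) => [|d IH].
  by case: kE_spec => _ h _; rewrite add0n -/(r n t _) h muln0.
rewrite addSn rpS /=.
move: IH; case: (rp n t (d + kE n t)) => x y /= /eqP; rewrite muln_eq0.
by case/orP=> /eqP ->; rewrite ?mod0n ?muln0 ?mul0n.
Qed.

Lemma q_after j : kE n t <= j -> q n t j.+1 = 0.
Proof.
move=> /prod_after; rewrite /q /=; case: (rp n t j) => x y /= /eqP.
by rewrite muln_eq0; case/orP=> /eqP ->; rewrite ?div0n ?divn0.
Qed.
End K.

Lemma aE_spec n t i : 0 < i ->
  [/\ aE n t i <= (kE n t)./2, tm n t (aE n t i) < i &
     forall a, a <= (kE n t)./2 -> tm n t a < i -> a <= aE n t i].
Proof.
move=> i0.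
have hA : 0 < #|(fun a : 'I_(kE n t)./2.+1 => tm n t a < i)|.
  by apply/card_gt0P; exists ord0; rewrite /in_mem /= tm0.
have [a0 ha0 he] := eq_bigmax_cond (fun a : 'I_(kE n t)./2.+1 => (a : nat)) hA.
have hE : aE n t i = a0 by rewrite /aE he.
split.
- by rewrite hE -ltnS.
- by rewrite hE; move: ha0; rewrite /in_mem.
- move=> a ha hta.
  have := @leq_bigmax_cond _ (fun a : 'I_(kE n t)./2.+1 => tm n t a < i)
    (fun a : 'I_(kE n t)./2.+1 => (a : nat)) (Ordinal (_ : a < (kE n t)./2.+1)) hta.
  by apply.
Qed.

Lemma lprE w z : 0 < w -> lpr (Posz w) (Posz z) = Posz ((w - 1) %% z).+1.
Proof.
move=> w0; rewrite /lpr.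
have -> : (Posz w - 1 = Posz (w - 1))%R by lia.
rewrite modz_nat; lia.
Qed.

Lemma cong_nat a b c d m : b <= a -> d <= c ->
  ((Posz a - Posz b)%R == (Posz c - Posz d)%R %[mod Posz m])%Z = (a - b == c - d %[mod m]).
Proof.
move=> h1 h2; rewrite (_ : (Posz a - Posz b)%R = Posz (a - b)); last by lia.
rewrite (_ : (Posz c - Posz d)%R = Posz (c - d)); last by lia.
by rewrite !modz_nat eqz_nat.
Qed.

Lemma gmemP n t i x : 0 < i <= t -> 0 < x <= n ->
  g_mem n t i x <-> Char n t i x.
Proof.
move=> /andP [i0 it] /andP [x0 xn].
have t0 : 0 < t by lia.
have [k0 rk rpos] := kE_spec n t0.
have [a1 a2 a3] := aE_spec n t i0.
set k := kE n t in k0 rk rpos a1 a3.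
set a := aE n t i in a1 a2 a3.
rewrite /g_mem -/k -/a; split.
- case/orP.
  + case/existsP=> j /andP [h1 h2]; left; exists j; split => //.
    apply: leq_ltn_trans a2; apply: tm_mono; have := ltn_ord j; lia.
  + case/andP => hk /eqP hx; right; exists a.
    have ha : (2 * a).+2 <= k.
      have : 2 * a != k.
        apply/eqP=> e; have := t_eq n t a; rewrite e rk addn0; lia.
      move: hk; have : 2 * a <= k by move: a1; lia. lia.
    have hz : 0 < r n t (2 * a).+1 by apply: rpos; lia.
    have hw : 0 < i - tm n t a by lia.
    have e1 : (Posz i - Posz (tm n t a))%R = Posz (i - tm n t a) by lia.
    rewrite e1 lprE // in hx.
    have hx' : x = nm n t a.+1 + ((i - tm n t a - 1) %% r n t (2 * a).+1).+1 by lia.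
    split.
    * apply/andP; split => //.
      case: (leqP i (tm n t a.+1)) => // hlt.
      have := a3 a.+1 _ hlt; lia.
    * lia.
    * rewrite cong_nat; [| lia | lia].
      rewrite hx' (_ : nm n t a.+1 + _ - nm n t a.+1 = ((i - tm n t a - 1) %% r n t (2 * a).+1).+1); last by lia.
      apply/eqP; rewrite -[((_ %% _).+1)]addn1 modnDml; congr (_ %% _); lia.
- case=> [[j [/andP [h1 h2] h3 h4]] | [b [/andP [h1 h2] h3 h4]]].
  + apply/orP; left; apply/existsP.
    have hj : j < a.+1.
      case: (leqP j k./2) => hjk; first by have := a3 j hjk h3; lia.
      have := @q_after n t t0 (2 * j); rewrite nmS in h2.
      move=> /(_ ltac:(lia)) hq; rewrite hq mul0n addn0 in h2; lia.
    by exists (Ordinal hj); rewrite /= h1 h2 h4.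
  + have hq : 0 < q n t (2 * b).+2 by move: h1 h2; rewrite tmS; case: (q _ _ _); lia.
    have hbk : (2 * b).+2 <= k.
      case: (leqP (2 * b).+2 k) => // hh.
      by have := @q_after n t t0 (2 * b).+1; move=> /(_ ltac:(lia)); lia.
    have hba : b = a.
      have := a3 b ltac:(lia) h1.
      rewrite leq_eqVlt => /orP [/eqP //|hlt].
      have := tm_mono n t hlt; lia.
    subst b.
    apply/orP; right; apply/andP; split; first by apply/eqP; lia.
    have hz : 0 < r n t (2 * a).+1 by apply: rpos; lia.
    rewrite (_ : (Posz i - Posz (tm n t a))%R = Posz (i - tm n t a)); last by lia.
    rewrite lprE; last by lia.
    have hxn := n_eq n t a.+1.
    rewrite (_ : 2 * a.+1 = (2 * a).+2) ?R_S in hxn; last by lia.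
    move: h4; rewrite cong_nat; [|lia|lia] => h4.
    apply/eqP; apply/eqP.
    suff : (i - tm n t a - 1) %% r n t (2 * a).+1 = x - nm n t a.+1 - 1 by lia.
    rewrite -(modn_small (_ : x - nm n t a.+1 - 1 < r n t (2 * a).+1)); last by lia.
    have e1 : i - tm n t a - 1 + 1 = i - tm n t a by lia.
    have e2 : x - nm n t a.+1 - 1 + 1 = x - nm n t a.+1 by lia.
    by apply/eqP; rewrite -(eqn_modDr 1) e1 e2.
Qed.

Definition spanL (M : nat -> nat -> bool) (Y X : seq nat) :=
  forall S : pred nat, has S Y ->
    has (fun x => odd (count (fun i => S i && M i x) Y)) X.
Definition spanR (M : nat -> nat -> bool) (Y X : seq nat) :=
  forall T : pred nat, has T X ->
    has (fun i => odd (count (fun x => T x && M i x) X)) Y.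
Definition spn M Y X := spanL M Y X /\ spanR M Y X.

Lemma spn_tr M Y X : spn M Y X -> spn (fun x i => M i x) X Y.
Proof. by case=> h1 h2; split. Qed.

Lemma spn_perm M Y X Y' X' : perm_eq Y Y' -> perm_eq X X' ->
  spn M Y X -> spn M Y' X'.
Proof.
move=> pY pX [h1 h2]; split.
- move=> S; rewrite -(perm_has _ pY) -(perm_has _ pX) => /h1.
  by apply: sub_has => x; rewrite (permP pY).
- move=> T; rewrite -(perm_has _ pY) -(perm_has _ pX) => /h2.
  by apply: sub_has => x; rewrite (permP pX).
Qed.

Lemma spn_ext M M' Y X :
  (forall i x, i \in Y -> x \in X -> M i x = M' i x) ->
  spn M Y X -> spn M' Y X.
Proof.
move=> e [h1 h2]; split.
- move=> S /h1 /hasP [x xX hx]; apply/hasP; exists x => //.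
  by rewrite -(eq_in_count (a1 := fun i => S i && M i x)) // => i iY; rewrite e.
- move=> T /h2 /hasP [i iY hi]; apply/hasP; exists i => //.
  by rewrite -(eq_in_count (a1 := fun x => T x && M i x)) // => x xX; rewrite e.
Qed.

Lemma spn_map M M' f h Y X :
  (forall i x, i \in Y -> x \in X -> M (f i) (h x) = M' i x) ->
  spn M' Y X -> spn M (map f Y) (map h X).
Proof.
move=> e [h1 h2]; split.
- move=> S; rewrite has_map => /h1 /hasP [x xX hx]; apply/hasP.
  exists (h x); first exact: map_f.
  rewrite count_map; rewrite -(eq_in_count (a1 := fun i => S (f i) && M' i x)) // => i iY.
  by rewrite /= e.
- move=> T; rewrite has_map => /h2 /hasP [i iY hi]; apply/hasP.
  exists (f i); first exact: map_f.
  rewrite count_map; rewrite -(eq_in_count (a1 := fun x => T (h x) && M' i x)) // => x xX.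
  by rewrite /= e.
Qed.

Lemma count_false (P : pred nat) s : (forall x, x \in s -> P x = false) -> count P s = 0.
Proof.
move=> h; apply/eqP; rewrite -leqn0 leqNgt -has_count; apply/hasPn => x /h ->; done.
Qed.

Lemma spn_cat M Y1 Y2 X1 X2 :
  (forall i x, i \in Y1 -> x \in X2 -> M i x = false) ->
  spn M Y1 X1 -> spn M Y2 X2 -> spn M (Y1 ++ Y2) (X1 ++ X2).
Proof.
move=> z [h1 h2] [h3 h4]; split.
- move=> S hS; rewrite has_cat; case: (boolP (has S Y2)) => hS2.
  + have /hasP [x xX hx] := h3 _ hS2; apply/orP; right; apply/hasP; exists x => //.
    rewrite count_cat count_false ?add0n // => i iY; by rewrite z ?andbF.
  + have hS1 : has S Y1 by move: hS; rewrite has_cat (negbTE hS2) orbF.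
    have /hasP [x xX hx] := h1 _ hS1; apply/orP; left; apply/hasP; exists x => //.
    rewrite count_cat (count_false (s := Y2)) ?addn0 // => i iY.
    by move/hasPn: hS2 => /(_ i iY) /negbTE ->.
- move=> T hT; rewrite has_cat; case: (boolP (has T X1)) => hT1.
  + have /hasP [i iY hi] := h2 _ hT1; apply/orP; left; apply/hasP; exists i => //.
    rewrite count_cat (count_false (s := X2)) ?addn0 // => x xX; by rewrite z ?andbF.
  + have hT2 : has T X2 by move: hT; rewrite has_cat (negbTE hT1).
    have /hasP [i iY hi] := h4 _ hT2; apply/orP; right; apply/hasP; exists i => //.
    rewrite count_cat count_false ?add0n // => x xX.
    by move/hasPn: hT1 => /(_ x xX) /negbTE ->.
Qed.

Lemma spn_e M (rho : nat -> nat) Y X :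
  uniq Y -> uniq X -> {in X &, injective rho} ->
  (forall x, x \in X -> rho x \in Y) ->
  (forall i, i \in Y -> exists2 x, x \in X & rho x = i) ->
  (forall i x, i \in Y -> x \in X -> M i x = (i == rho x)) -> spn M Y X.
Proof.
move=> uY uX inj into onto e; split.
- move=> S /hasP [i0 i0Y Si0]; have [x0 x0X ex0] := onto _ i0Y.
  apply/hasP; exists x0 => //.
  rewrite (eq_in_count (a2 := pred1 i0)) ?count_uniq_mem ?i0Y // => i iY /=.
  rewrite e // ex0; case: eqP => [->|]; by rewrite ?Si0 ?andbF.
- move=> T /hasP [x0 x0X Tx0]; apply/hasP; exists (rho x0); first exact: into.
  rewrite (eq_in_count (a2 := pred1 x0)) ?count_uniq_mem ?x0X // => x xX /=.
  rewrite e ?into //; case: (eqVneq x x0) => [->|ne]; first by rewrite eqxx Tx0.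
  rewrite andbC; case: eqP => // /esym/inj; move=> /(_ xX x0X) h; by rewrite h eqxx in ne.
Qed.

Lemma modeq_small v i t : 0 < v <= t -> 0 < i <= t -> (v == i %[mod t]) = (v == i).
Proof.
move=> hv hi.
have e1 : v = (v - 1) + 1 by lia.
have e2 : i = (i - 1) + 1 by lia.
rewrite {1}e1 {1}e2 eqn_modDr !modn_small; try lia.
Qed.

Lemma C1 n t i x : 0 < i <= t -> 0 < x <= n %/ t * t ->
  g_mem n t i x = (x == i %[mod t]).
Proof.
move=> hi hx.
have hxn : x <= n by case/andP: hx => _ h; exact: leq_trans h (leq_trunc_div n t).
rewrite -nm1 in hx.
apply/idP/idP.
- move/(@gmemP n t i x hi ltac:(lia)); rewrite Char_low //; lia.
- move=> h; apply/(@gmemP n t i x hi ltac:(lia)); rewrite Char_low //; lia.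
Qed.

Lemma C1e n t u i x : 0 < i <= t -> u * t < x <= u * t + t -> x <= n %/ t * t ->
  g_mem n t i x = (i == x - u * t).
Proof.
move=> hi hx hxN; rewrite C1 //; last by lia.
have ev : x = u * t + (x - u * t) by lia.
rewrite {1}ev modnMDl modeq_small; [|lia|lia].
by rewrite eq_sym.
Qed.

Lemma C2 n t i x : 0 < i <= t -> n %/ t * t < x <= n ->
  g_mem n t i x = g_mem t (n %% t) (x - n %/ t * t) i.
Proof.
move=> hi hx.
have en := divn_eq n t.
have H1 : 0 < x <= n by move: hx; move: (n %/ t * t) => N; lia.
have H2 : 0 < x - n %/ t * t <= n %% t.
  by move: hx en; move: (n %/ t * t) (n %% t) => N r; lia.
have H0 : nm n t 1 < x by rewrite nm1; case/andP: hx.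
apply/idP/idP.
- move/(@gmemP n t i x hi H1); rewrite Char_shift // nm1.
  by move/(@gmemP t (n %% t) (x - n %/ t * t) i H2 hi).
- move/(@gmemP t (n %% t) (x - n %/ t * t) i H2 hi) => h.
  by apply/(@gmemP n t i x hi H1); rewrite Char_shift // nm1.
Qed.

Definition Wseq n t s :=
  if s + t <= n then iota s.+1 t else iota s.+1 (n - s) ++ iota 1 (s + t - n).

Lemma nohas (s1 s2 : seq nat) : (forall x, x \in s2 -> x \in s1 -> False) ->
  ~~ has (mem s1) s2.
Proof. move=> h; apply/hasPn => x /h hx; apply/negP => /hx. done. Qed.

Ltac solve_uniq :=
  rewrite ?cat_uniq ?iota_uniq ?andbT ?andTb;
  repeat (apply/andP; split);
  rewrite ?cat_uniq ?iota_uniq ?andbT ?andTb //;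
  try (apply: nohas => x; rewrite ?mem_cat ?mem_iota; lia).

Ltac solve_perm :=
  apply: uniq_perm; [solve_uniq | solve_uniq |
    move=> x; rewrite ?mem_cat ?mem_iota; lia].

Lemma spn_nil M : spn M [::] [::].
Proof. by split. Qed.

Lemma test a b c : a + b <= c -> perm_eq (iota 1 c) (iota (a+b).+1 (c - a - b) ++ iota 1 a ++ iota a.+1 b).
Proof. move=> h. solve_perm. Qed.

Lemma step n t : 0 < t <= n ->
  (forall b, b + n %% t <= t ->
     spn (g_mem n t) (iota b.+1 (n %% t)) (iota (n %/ t * t).+1 (n %% t))) ->
  (forall m, m <= n %% t -> spn (g_mem n t) (iota (t - m).+1 m) (iota (n - m).+1 m)) ->
  (forall s, s < n -> spn (g_mem n t) (iota 1 t) (Wseq n t s)) /\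
  (forall m, m <= t -> spn (g_mem n t) (iota (t - m).+1 m) (iota (n - m).+1 m)).
Proof.
move=> /andP [t0 tn] HW HP.
have en := divn_eq n t.
have rt : n %% t < t := ltn_pmod n t0.
have Q0 : 0 < n %/ t by rewrite divn_gt0.
have tN : t <= n %/ t * t by rewrite leq_pmull.
have C2' : forall i x, 0 < i <= t -> n %/ t * t < x <= n ->
    g_mem n t i x = g_mem t (n %% t) (x - n %/ t * t) i := fun i x => @C2 n t i x.
have Cr : forall y i, 0 < y <= n %% t -> 0 < i <= n %% t -> g_mem t (n %% t) y i = (y == i).
  move=> y i hy hi.
  have r0 : 0 < n %% t by lia.
  have hrt : n %% t <= t %/ (n %% t) * (n %% t).
    by rewrite leq_pmull // divn_gt0 // ltnW.
  rewrite (@C1e t (n %% t) 0 y i) //; last by lia.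
  by rewrite mul0n subn0.
have CA : forall s, exists U, [/\ U <= s < U + t,
    (forall i x, 0 < i <= t -> U < x <= U + t -> x <= n %/ t * t -> g_mem n t i x = (i == x - U)) &
    (forall i x, 0 < i <= t -> U + t < x <= U + t + t -> x <= n %/ t * t ->
        g_mem n t i x = (i == x - (U + t)))].
  move=> s; exists (s %/ t * t); split.
  - have := divn_eq s t; have := ltn_pmod s t0; move: (s %/ t * t) (s %% t) => U w; lia.
  - by move=> i x hi hx hxN; apply: C1e.
  - by move=> i x hi hx hxN; rewrite -mulSnr; apply: C1e; rewrite // mulSnr.
have Ctop : forall i x, 0 < i <= t -> n %/ t * t - t < x <= n %/ t * t ->
    g_mem n t i x = (i == x - (n %/ t * t - t)).
  move=> i x hi hx.
  have e : (n %/ t).-1 * t = n %/ t * t - t by rewrite -{2}(prednK Q0) mulSn addKn.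
  by rewrite -e; apply: C1e; rewrite // ?e; move: hx tN; move: (n %/ t * t) => N; lia.
have Clow : forall i x, 0 < i <= t -> 0 < x <= t -> g_mem n t i x = (i == x).
  move=> i x hi hx; rewrite (@C1e n t 0 i x) ?mul0n ?subn0 ?add0n //.
  by move: hx tN; move: (n %/ t * t) => N; lia.
move: (n %/ t * t) (n %% t) en rt tN C2' Cr CA Ctop HW HP => N r en rt tN C2' Cr CA Ctop HW HP.
set M := g_mem n t.
split.
- move=> s sn.
  case: (leqP (s + t) N) => hA.
  +
    have [U [hU C3 C4]] := CA s.
    rewrite /Wseq (_ : s + t <= n); last by lia.
    pose rho x := if x <= U + t then x - U else x - (U + t).
    apply: (@spn_e M rho); rewrite ?iota_uniq //.
    * move=> x y; rewrite !mem_iota /rho => hx hy; case: ifP; case: ifP; lia.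
    * move=> x; rewrite !mem_iota /rho; case: ifP; lia.
    * move=> i; rewrite mem_iota => hi.
      case: (ltnP s (U + i)) => hh.
      - exists (U + i); first by rewrite mem_iota; lia.
        by rewrite /rho ifT; lia.
      - exists (U + t + i); first by rewrite mem_iota; lia.
        by rewrite /rho ifF; lia.
    * move=> i x; rewrite !mem_iota /rho => hi hx; case: ifP => hh.
      - by apply: C3; lia.
      - by apply: C4; lia.
  case: (leqP (s + t) n) => hB.
  +
    have hsN : s < N by lia.
    rewrite /Wseq hB.
    set m := s + t - N.
    have key : spn M (iota 1 m ++ iota m.+1 (t - m)) (iota N.+1 m ++ iota s.+1 (N - s)).
      apply: spn_cat.
      * move=> i x; rewrite !mem_iota => hi hx; rewrite /M Ctop; last by lia.
        by apply/eqP; lia. by lia.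
      * apply: (@spn_e M (fun x => x - N)); rewrite ?iota_uniq //.
        - move=> x y; rewrite !mem_iota; lia.
        - move=> x; rewrite !mem_iota; lia.
        - move=> i; rewrite mem_iota => hi; exists (N + i); rewrite ?mem_iota; lia.
        - move=> i x; rewrite !mem_iota => hi hx; rewrite /M C2'; [|lia|lia].
          rewrite Cr; [|lia|lia]; by rewrite eq_sym.
      * apply: (@spn_e M (fun x => x - (N - t))); rewrite ?iota_uniq //.
        - move=> x y; rewrite !mem_iota; lia.
        - move=> x; rewrite !mem_iota; lia.
        - move=> i; rewrite mem_iota => hi; exists (N - t + i); rewrite ?mem_iota; lia.
        - move=> i x; rewrite !mem_iota => hi hx; rewrite /M Ctop; lia.
    by apply: spn_perm key; solve_perm.
  case: (ltnP s N) => hC.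
  +
    rewrite /Wseq ifF; last by lia.
    set b := s + t - n.
    pose rho x := if x <= b then x else x - (N - t).
    have hE : forall i x, 0 < i <= t -> x \in iota s.+1 (N - s) ++ iota 1 b ->
        M i x = (i == rho x).
      move=> i x hi; rewrite mem_cat !mem_iota /rho => hx; case: ifP => hh.
      - by rewrite /M Clow; lia.
      - by rewrite /M Ctop; lia.
    have key : spn M (iota b.+1 r ++ (iota (b + r).+1 (N - s) ++ iota 1 b))
                     (iota N.+1 r ++ (iota s.+1 (N - s) ++ iota 1 b)).
      apply: spn_cat.
      * move=> i x hi hx; rewrite hE //; last by move: hi; rewrite mem_iota; lia.
        move: hi hx; rewrite mem_cat !mem_iota /rho => hi hx; case: ifP => hh; apply/eqP; lia.
      * by apply: HW; lia.
      * apply: (@spn_e M rho).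
        - by solve_uniq.
        - by solve_uniq.
        - move=> x y; rewrite !mem_cat !mem_iota /rho => hx hy; case: ifP; case: ifP; lia.
        - move=> x; rewrite !mem_cat !mem_iota /rho; case: ifP; lia.
        - move=> i; rewrite mem_cat !mem_iota => hi.
          case: (leqP i b) => hh.
          + exists i; first by rewrite mem_cat !mem_iota; lia.
            by rewrite /rho ifT.
          + exists (N - t + i); first by rewrite mem_cat !mem_iota; lia.
            by rewrite /rho ifF; lia.
        - move=> i x hi hx; apply: hE => //; move: hi; rewrite mem_cat !mem_iota; lia.
    by apply: spn_perm key; solve_perm.
  +
    rewrite /Wseq ifF; last by lia.
    set m := n - s.
    have key : spn M (iota (t - m).+1 m ++ iota 1 (t - m)) (iota s.+1 m ++ iota 1 (t - m)).
      apply: spn_cat.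
      * move=> i x; rewrite !mem_iota => hi hx; rewrite /M Clow; [|lia|lia].
        by apply/eqP; lia.
      * by rewrite (_ : s = n - m); [apply: HP; lia | lia].
      * apply: (@spn_e M id); rewrite ?iota_uniq //;
          [by move=> i hi; exists i |
           move=> i x; rewrite !mem_iota => hi hx; rewrite /M Clow; lia].
    by apply: spn_perm key; solve_perm.
- move=> m mt.
  case: (leqP m r) => hm; first exact: HP.
  have key : spn M (iota (t - m).+1 r ++ iota (t - m + r).+1 (m - r))
                   (iota N.+1 r ++ iota (n - m).+1 (m - r)).
    apply: spn_cat.
    * move=> i x; rewrite !mem_iota => hi hx; rewrite /M Ctop; last by lia.
      by apply/eqP; lia. by lia.
    * by apply: HW; lia.
    * apply: (@spn_e M (fun x => x - (N - t))); rewrite ?iota_uniq //.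
      - move=> x y; rewrite !mem_iota; lia.
      - move=> x; rewrite !mem_iota; lia.
      - move=> i; rewrite mem_iota => hi; exists (N - t + i); rewrite ?mem_iota; lia.
      - move=> i x; rewrite !mem_iota => hi hx; rewrite /M Ctop; lia.
  by apply: spn_perm key; solve_perm.
Qed.

Lemma tailmap n t Y Xy : 0 < t <= n ->
  (forall i, i \in Y -> 0 < i <= t) -> (forall y, y \in Xy -> 0 < y <= n %% t) ->
  spn (g_mem t (n %% t)) Xy Y -> spn (g_mem n t) Y (map (addn (n %/ t * t)) Xy).
Proof.
move=> /andP [t0 tn] hY hX h.
rewrite -(map_id Y); apply: spn_map (spn_tr h).
move=> i y hi hy; rewrite C2; last first.
  have := hX _ hy; have := divn_eq n t; move: (n %/ t * t) (n %% t) => N r; lia.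
  exact: hY.
by rewrite addKn.
Qed.

Lemma inv_main t n : 0 < t <= n ->
  (forall s, s < n -> spn (g_mem n t) (iota 1 t) (Wseq n t s)) /\
  (forall m, m <= t -> spn (g_mem n t) (iota (t - m).+1 m) (iota (n - m).+1 m)).
Proof.
elim/ltn_ind: t n => t IH n /andP [t0 tn].
have en := divn_eq n t.
have rt : n %% t < t := ltn_pmod n t0.
apply: step; first by rewrite t0 tn.
- move=> b hb; case: (posnP (n %% t)) => r0.
    by rewrite r0 /=; apply: spn_nil.
  have h0 : 0 < n %% t <= t by rewrite r0 ltnW.
  have [IW _] := IH _ rt t h0.
  have := IW b ltac:(lia); rewrite /Wseq ifT // => h.
  rewrite -[(n %/ t * t).+1]addn1 iotaDl; apply: tailmap h.
  + by rewrite t0.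
  + by move=> i; rewrite mem_iota; lia.
  + by move=> i; rewrite mem_iota; lia.
- move=> m hm; case: (posnP (n %% t)) => r0.
    by have -> : m = 0 by lia.
  have h0 : 0 < n %% t <= t by rewrite r0 ltnW.
  have [_ IP] := IH _ rt t h0.
  have := IP m hm => h.
  rewrite (_ : (n - m).+1 = n %/ t * t + (n %% t - m).+1); last first.
    by move: en hm; move: (n %/ t * t) (n %% t) => N r; lia.
  rewrite iotaDl; apply: tailmap h.
  + by rewrite t0.
  + by move=> i; rewrite mem_iota; lia.
  + by move=> i; rewrite mem_iota; lia.
Qed.

Lemma odd_symdiff (T : finType) (A B : {set T}) :
  odd #|symdiff A B| = odd #|A| (+) odd #|B|.
Proof.
rewrite /symdiff cardsU.
have -> : (A :\: B) :&: (B :\: A) = set0.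
  by apply/setP => x; rewrite !inE; case: (x \in A); case: (x \in B).
rewrite cards0 subn0 -(cardsID B A) -(cardsID A B) setIC !oddD.
by case: (odd _); case: (odd _); case: (odd _).
Qed.

Section Main.
Variables n t : nat.

Definition xs (S : {set 'I_t}) : {set 'I_n} :=
  [set x : 'I_n | odd #|[set j in S | x \in g n t (val j).+1]|].

Lemma xs_sym S1 S2 : symdiff (xs S1) (xs S2) = xs (symdiff S1 S2).
Proof.
apply/setP => x; rewrite /xs /symdiff !inE.
set P := fun j : 'I_t => x \in g n t (val j).+1.
have -> : [set j in (S1 :\: S2) :|: (S2 :\: S1) | P j] =
    symdiff [set j in S1 | P j] [set j in S2 | P j].
  by apply/setP => j; rewrite /symdiff !inE; case: (j \in S1); case: (j \in S2); case: (P j).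
rewrite odd_symdiff.
by case: (odd #|[set j in S1 | P j]|); case: (odd #|[set j in S2 | P j]|).
Qed.

Lemma xs0 : xs set0 = set0.
Proof.
apply/setP => x; rewrite /xs !inE.
by rewrite (_ : [set j in set0 | _] = set0) ?cards0 //; apply/setP => j; rewrite !inE.
Qed.

Lemma xs1 i : xs [set i] = g n t (val i).+1.
Proof.
apply/setP => x; rewrite /xs in_set.
case h: (x \in g n t (val i).+1).
- rewrite (_ : [set j in [set i] | _] = [set i]) ?cards1 //.
  by apply/setP => j; rewrite in_set !in_set1; case: eqP => // ->; rewrite h.
- rewrite (_ : [set j in [set i] | _] = set0) ?cards0 //.
  by apply/setP => j; rewrite in_set in_set1 in_set0; case: eqP => // ->; rewrite h.
Qed.

Definition Span := [set xs S | S in [set: {set 'I_t}]].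

Lemma Span_subgroup : is_subgroup Span.
Proof.
apply/andP; split.
- by apply/imsetP; exists set0; rewrite ?inE ?xs0.
- apply/forall_inP => A /imsetP [S1 _ ->]; apply/forall_inP => B /imsetP [S2 _ ->].
  by rewrite xs_sym; apply/imsetP; exists (symdiff S1 S2); rewrite ?inE.
Qed.

Lemma G_Span : G n t = Span.
Proof.
apply/eqP; rewrite eqEsubset; apply/andP; split.
- rewrite /G /generated; apply: bigcap_inf; rewrite Span_subgroup /=.
  apply/subsetP => A /imsetP [i _ ->]; rewrite -xs1; apply/imsetP; exists [set i]; rewrite ?inE //.
- apply/subsetP => A /imsetP [S _ ->]; apply/bigcapP => H /andP [sH gH].
  move/andP: sH => [H0 /forall_inP Hc].
  suff : forall m (S : {set 'I_t}), #|S| = m -> xs S \in H by move=> /(_ _ S erefl).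
  elim=> [|m IH] S0 hS0.
  + by move/eqP: hS0; rewrite cards_eq0 => /eqP ->; rewrite xs0.
  + have [i iS] : exists i, i \in S0.
      by apply/set0Pn; rewrite -card_gt0 hS0.
    have -> : S0 = symdiff [set i] (S0 :\ i).
      apply/setP => j; rewrite /symdiff !inE.
      by case: (eqVneq j i) => [->|ne] /=; rewrite ?iS ?eqxx /=; case: (j \in S0).
    rewrite -xs_sym xs1.
    have gi : g n t (val i).+1 \in H.
      by apply: (subsetP gH); apply/imsetP; exists i.
    move/forall_inP: (Hc _ gi) => Hc'; apply: Hc'.
    apply: IH; rewrite (cardsD1 i S0) iS in hS0; lia.
Qed.
End Main.

Lemma mem_Wseq n t s x : s < n -> t <= n -> x < n ->
  (x.+1 \in Wseq n t s) = [exists j : 'I_t, x == (s + j) %% n].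
Proof.
move=> sn tn xn; apply/idP/existsP.
- rewrite /Wseq; case: ifP => h; rewrite ?mem_cat !mem_iota => hx.
  + have hj : x - s < t by lia.
    exists (Ordinal hj) => /=; rewrite modn_small; lia.
  + case: (leqP s x) => hs.
    * have hj : x - s < t by lia.
      exists (Ordinal hj) => /=; rewrite modn_small; lia.
    * have hj : x + n - s < t by lia.
      exists (Ordinal hj) => /=.
      rewrite (_ : s + (x + n - s) = x + n); last by lia.
      by rewrite modnDr modn_small.
- case=> j /eqP ->; have := ltn_ord j; rewrite /Wseq.
  case: (ltnP (s + j) n) => hsj hj.
  + rewrite modn_small //; case: ifP => h; rewrite ?mem_cat !mem_iota; lia.
  + rewrite (_ : s + j = (s + j - n) + n); last by lia.
    rewrite modnDr modn_small; last by lia.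
    case: ifP => h; rewrite ?mem_cat !mem_iota; lia.
Qed.

Lemma window_Wseq n t (s : int) (x : 'I_n) : t <= n ->
  (x \in window n t s) = (x.+1 \in Wseq n t `|(s %% Posz n)%Z|%N).
Proof.
move=> tn.
have n0 : 0 < n by case: x => x; lia.
have hs : (0 <= (s %% Posz n)%Z)%R by apply: modz_ge0; rewrite eqz_nat -lt0n.
have hs' : `|(s %% Posz n)%Z|%N < n.
  by rewrite -ltz_nat gez0_abs // ltz_pmod.
rewrite mem_Wseq ?ltn_ord // /window inE.
apply: eq_existsb => j.
rewrite /lpr; change (val j) with (nat_of_ord j).
have -> : ((s + Posz (nat_of_ord j).+1 - 1) = s + Posz (nat_of_ord j))%R by lia.
rewrite -modzDml -[((s %% Posz n)%Z)]gez0_abs // -PoszD modz_nat.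
rewrite absz_nat; set K := ((_ + _) %% n)%N; lia.
Qed.

Lemma count_card n t (S : {set 'I_t}) (x : 'I_n) :
  count (fun i => [exists j in S, i == (val j).+1] && g_mem n t i x.+1) (iota 1 t)
  = #|[set j in S | x \in g n t (val j).+1]|.
Proof.
rewrite (_ : iota 1 t = map (addn 1) (iota 0 t)); last by rewrite -iotaDl.
rewrite -val_enum_ord -map_comp count_map.
rewrite cardE /enum_mem size_filter -enumT count_filter; apply: eq_count => j /=.
rewrite !inE add1n andbT; congr (_ && _).
apply/existsP/idP => [[j' /andP [hj' /eqP e]]|hj].
- by have -> : j = j' by apply: val_inj; case: e.
- by exists j; rewrite hj eqxx.
Qed.

Lemma Wseq_range n t s y : s < n -> t <= n -> y \in Wseq n t s -> 0 < y <= n.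
Proof. move=> sn tn; rewrite /Wseq; case: ifP => h; rewrite ?mem_cat !mem_iota; lia. Qed.

Lemma key n t (S : {set 'I_t}) s : 0 < t <= n -> S != set0 -> s < n ->
  exists x : 'I_n, x \in xs n S /\ x.+1 \in Wseq n t s.
Proof.
move=> htn hS hs.
have [IW _] := inv_main htn.
have [[L _]] := (IW s hs, 0).
have [j0 j0S] := set0Pn _ hS.
have := L (fun i => [exists j in S, i == (val j).+1]).
case/(_ _)/hasP.
  apply/hasP; exists j0.+1; first by rewrite mem_iota; have := ltn_ord j0; lia.
  by apply/existsP; exists j0; rewrite j0S eqxx.
move=> y hy hodd.
have tn : t <= n by case/andP: htn.
have [y0 yn] := andP (@Wseq_range n t s y hs tn hy).
have hx : y.-1 < n by lia.
exists (Ordinal hx); split => /=; last by rewrite prednK.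
rewrite /xs inE -count_card /= prednK //.
Qed.

Theorem lemma3 (n t : nat) (ht : 0 < t) (htn : t <= n) :
  #|G n t| = 2 ^ t /\
  (forall A, A \in G n t -> A != set0 ->
     forall s : int, A :&: window n t s != set0).
Proof.
have h : 0 < t <= n by rewrite ht htn.
rewrite G_Span; split.
- rewrite /Span card_imset.
    by rewrite -powersetT card_powerset cardsT card_ord.
  move=> S1 S2 e.
  have : xs n (symdiff S1 S2) = set0.
    by rewrite -xs_sym e /symdiff setDv setU0.
  case: (eqVneq (symdiff S1 S2) set0) => [hs _|hs].
    apply/setP => j; move/setP: hs => /(_ j); rewrite /symdiff !inE.
    by case: (j \in S1); case: (j \in S2).
  have [x [hx _]] := key (s := 0) h hs ltac:(lia).
  by move=> e0; rewrite e0 inE in hx.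
- move=> A /imsetP [S _ ->] hA s.
  have hS : S != set0 by apply: contraNneq hA => ->; rewrite xs0.
  have n0 : 0 < n by lia.
  have hs' : `|(s %% Posz n)%Z|%N < n.
    have hs : (0 <= (s %% Posz n)%Z)%R by apply: modz_ge0; rewrite eqz_nat -lt0n.
    by rewrite -ltz_nat gez0_abs // ltz_pmod.
  have [x [hx hw]] := key h hS hs'.
  apply/set0Pn; exists x; rewrite inE hx /= window_Wseq //.
Qed.
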